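(* Let $V$ be a Majorana representation with identity $\mathbb 1$ satisfying axiom M2'. Suppose that for every idempotent $x\in V$ the space $V_0^{(x)}$ contains finitely many idempotents and $d(x)\le 2$, where $d(x)=\dim V_0^{(x)}$. Then every associative subalgebra of $V$ has dimension at most $3$.
   Context: A transposition group $(G,T)$ is a finite group $G$ with a $G$-stable set $T$ of involutions generating $G$. A Majorana representation of $(G,T)$ is a quintuple $(G,T,V,\varphi,\psi)$ where $V$ is a commutative non-associative real algebra with a (positive definite) inner product $(\,,)$, $\varphi:G\to GL(V)$ is a representation with $\varphi(G)\le \mathrm{Aut}(V)$, and $\psi:T\to V\setminus\{0\}$ is injective with $\psi(t^g)=\psi(t)^{\varphi(g)}$, such that: (M1) $(u,v\cdot w)=(u\cdot v,w)$ for all $u,v,w$; (M2) $(u\cdot u,v\cdot v)\ge (u\cdot v,u\cdot v)$ for all $u,v$; (M3) elements of $\psi(T)$ (Majorana axes) are idempotents of length $1$; (M4) each Majorana axis $a$ has $\mathrm{ad}_a:u\mapsto a\cdot u$ diagonalizable with eigenvalues in $\{0,1,\frac1{4},\frac1{32}\}$; (M5) $1$ is a simple eigenvalue of each Majorana axis; (M6) for each axis $a$ the linear map $\tau(a)$ acting as $(-1)^{32\mu}$ on the $\mu$-eigenspace of $\mathrm{ad}_a$ is an algebra automorphism; (M7) for each axis $a$ the map $\sigma(a)$ on $C_V(\tau(a))$ acting as $(-1)^{4\mu}$ on the $\mu$-eigenspaces, $\mu\ne\frac1{32}$, preserves the product of $C_V(\tau(a))$; (M8) $\tau(\psi(t))=\varphi(t)$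 for all $t\in T$. Axiom M2': the Norton inequality holds for all $u,v$, with equality precisely when $\mathrm{ad}_u$ and $\mathrm{ad}_v$ commute. $V_0^{(x)}$ is the $0$-eigenspace of $\mathrm{ad}_x:u\mapsto x\cdot u$. *)

(* Defs.v *)
From HB Require Import structures.
From mathcomp Require Import all_boot all_order all_algebra all_fingroup.
From mathcomp Require Import reals.
Set Implicit Arguments. Unset Strict Implicit. Unset Printing Implicit Defensive.
Import GRing.Theory Num.Theory.

Local Open Scope ring_scope.

Section Majorana.
Variable R : realType.
Variable V : vectType R.

Definition lin_map (f : V -> V) : Prop :=
  forall (a : R) (u v : V), f (a *: u + v) = a *: f u + f v.

Record comm_algebra (mult : V -> V -> V) : Prop := {
  mult_comm : forall u v, mult u v = mult v u;
  mult_linl : forall w, lin_map (fun u => mult u w) }.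

Record pos_inner_product (ip : V -> V -> R) : Prop := {
  ip_sym : forall u v, ip u v = ip v u;
  ip_linl : forall (w : V) (a : R) (u v : V), ip (a *: u + v) w = a * ip u w + ip v w;
  ip_pos : forall v, v != 0 -> 0 < ip v v }.

Definition idempotent_el (mult : V -> V -> V) (x : V) : Prop := mult x x = x.

Definition eigvec (mult : V -> V -> V) (a : V) (mu : R) (v : V) : Prop :=
  mult a v = mu *: v.

Definition algebra_aut (mult : V -> V -> V) (f : V -> V) : Prop :=
  [/\ lin_map f, bijective f & forall u v, f (mult u v) = mult (f u) (f v)].

Definition majorana_eigs : seq R := [:: 0; 1; 4^-1; 32^-1].

(* (-1)^(32 mu) for mu in {0,1,1/4,1/32} *)
Definition tau_sign (mu : R) : R := if mu == 32^-1 then -1 else 1.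
(* (-1)^(4 mu) for mu in {0,1,1/4} *)
Definition sigma_sign (mu : R) : R := if mu == 4^-1 then -1 else 1.

Definition tau_spec (mult : V -> V -> V) (a : V) (f : V -> V) : Prop :=
  lin_map f /\ forall mu v, mu \in majorana_eigs -> eigvec mult a mu v ->
    f v = tau_sign mu *: v.

Definition in_CV_tau (mult : V -> V -> V) (a u : V) : Prop :=
  forall f, tau_spec mult a f -> f u = u.

(* f restricted to C_V(tau(a)) is the map sigma(a) *)
Definition sigma_spec (mult : V -> V -> V) (a : V) (f : V -> V) : Prop :=
  lin_map f /\ forall mu v, mu \in [:: 0; 1; 4^-1] -> eigvec mult a mu v ->
    f v = sigma_sign mu *: v.

Record majorana_axis (mult : V -> V -> V) (ip : V -> V -> R) (a : V) : Prop := {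
  M3_idem : mult a a = a;
  M3_len : ip a a = 1;
  M4 : forall v, exists v0 v1 v2 v3,
        v = v0 + v1 + v2 + v3 /\
        [/\ eigvec mult a 0 v0, eigvec mult a 1 v1,
            eigvec mult a 4^-1 v2 & eigvec mult a 32^-1 v3];
  M5 : forall v, eigvec mult a 1 v -> exists c : R, v = c *: a;
  M6 : forall f, tau_spec mult a f -> algebra_aut mult f;
  M7 : forall f, sigma_spec mult a f -> forall u v,
        in_CV_tau mult a u -> in_CV_tau mult a v ->
        f (mult u v) = mult (f u) (f v) }.

Variable gT : finGroupType.

(* (G,T,V,phi,psi) is a Majorana representation; group elements act on the
   right: v^{phi(g)} = phi g v, so phi (g*h) = phi h \o phi g, and
   t^g = g^-1 t g. *)
Record majorana_rep (G : {group gT}) (T : {set gT}) (mult : V -> V -> V)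
    (ip : V -> V -> R) (phi : gT -> V -> V) (psi : gT -> V) : Prop := {
  T_sub : T \subset G;
  T_invol : forall t, t \in T -> #[t]%g = 2%N;
  T_stable : forall t g, t \in T -> g \in G -> (t ^ g)%g \in T;
  T_gen : (<<T>>)%g = G :> {set gT};
  V_alg : comm_algebra mult;
  V_ip : pos_inner_product ip;
  phi_lin : forall g, g \in G -> lin_map (phi g);
  phi_bij : forall g, g \in G -> bijective (phi g);
  phi_hom : forall g h, g \in G -> h \in G -> phi (g * h)%g =1 phi h \o phi g;
  phi_aut : forall g, g \in G -> algebra_aut mult (phi g);
  psi_inj : {in T &, injective psi};
  psi_nz : forall t, t \in T -> psi t != 0;
  psi_equiv : forall t g, t \in T -> g \in G -> psi (t ^ g)%g = phi g (psi t);
  axM1 : forall u v w, ip u (mult v w) = ip (mult u v) w;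
  axM2 : forall u v, ip (mult u v) (mult u v) <= ip (mult u u) (mult v v);
  axes : forall t, t \in T -> majorana_axis mult ip (psi t);
  axM8 : forall t, t \in T -> tau_spec mult (psi t) (phi t) }.

Definition axiom_M2' (mult : V -> V -> V) (ip : V -> V -> R) : Prop :=
  forall u v,
    ip (mult u v) (mult u v) <= ip (mult u u) (mult v v) /\
    (ip (mult u v) (mult u v) = ip (mult u u) (mult v v) <->
       forall w, mult u (mult v w) = mult v (mult u w)).

Definition V0 (mult : V -> V -> V) (x : V) : {vspace V} :=
  lker (linfun (mult x)).

Definition is_subalgebra (mult : V -> V -> V) (W : {vspace V}) : Prop :=
  forall u v, u \in W -> v \in W -> mult u v \in W.

Definition is_associative_on (mult : V -> V -> V) (W : {vspace V}) : Prop :=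
  forall u v w, u \in W -> v \in W -> w \in W ->
    mult (mult u v) w = mult u (mult v w).

End Majorana.

(* Main.v *)
Require Import Defs.
From HB Require Import structures.
From mathcomp Require Import all_boot all_order all_algebra all_fingroup.
From mathcomp Require Import reals.
From mathcomp Require Import complex.
From mathcomp Require Import ring lra.
From Stdlib Require Import Classical.
Set Implicit Arguments. Unset Strict Implicit. Unset Printing Implicit Defensive.
Import Order.TTheory GRing.Theory Num.Theory.
Local Open Scope ring_scope.

Section Aux.
Variable R : realType.
Lemma poly_le2 (r : {poly R}) : (size r <= 2)%N -> r = r`_1 *: 'X + (r`_0)%:P.
Proof.
move=> hs; apply/polyP => i; rewrite coefD coefZ coefX coefC.
case: i => [|[|i]] /=; rewrite ?mulr0 ?mulr1 ?add0r ?addr0 //.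
by rewrite nth_default // (leq_trans hs).
Qed.

Lemma lin_root (a b r1 r0 : R) : b != 0 ->
  (map_poly (real_complex R) (r1 *: 'X + r0%:P)).[Complex a b] = 0 -> r1 = 0 /\ r0 = 0.
Proof.
move=> bn0.
rewrite rmorphD /= map_polyZ map_polyX map_polyC /= !hornerE => H.
have := congr1 (@complex.Im R) H; rewrite /= mul0r !addr0 => /eqP.
rewrite mulf_eq0 (negPf bn0) orbF => /eqP r10; split=> //.
move: H; rewrite r10 => /(congr1 (@complex.Re R)) /=.
by rewrite !mul0r subrr add0r.
Qed.

Lemma quad_root (a b : R) :
  (map_poly (real_complex R) (('X - a%:P)^+2 + (b^+2)%:P)).[Complex a b] = 0.
Proof.
rewrite rmorphD rmorphXn rmorphB /= map_polyX !map_polyC /= !hornerE.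
apply/eqP; rewrite eq_complex /=; apply/andP; split; apply/eqP.
all: ring.
Qed.

End Aux.

Section Basic.
Variable R : realType.
Variable V : vectType R.
Variable mult : V -> V -> V.
Hypothesis Halg : comm_algebra mult.

Lemma mC u v : mult u v = mult v u.
Proof. exact: (mult_comm Halg). Qed.

Lemma mlin w a u v : mult (a *: u + v) w = a *: mult u w + mult v w.
Proof. exact: (mult_linl Halg). Qed.

Lemma m0l w : mult 0 w = 0.
Proof.
have H := mlin w 1 0 0; rewrite !scale1r addr0 in H.
by apply: (@addrI _ (mult 0 w)); rewrite addr0 -{1}H.
Qed.
Lemma m0r w : mult w 0 = 0. Proof. by rewrite mC m0l. Qed.
Lemma mDl u v w : mult (u + v) w = mult u w + mult v w.
Proof. by have := mlin w 1 u v; rewrite !scale1r. Qed.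
Lemma mZl a u w : mult (a *: u) w = a *: mult u w.
Proof. by have := mlin w a u 0; rewrite !addr0 m0l addr0. Qed.
Lemma mDr u v w : mult w (u + v) = mult w u + mult w v.
Proof. by rewrite !(mC w) mDl. Qed.
Lemma mZr a u w : mult w (a *: u) = a *: mult w u.
Proof. by rewrite !(mC w) mZl. Qed.
Lemma mNl u w : mult (- u) w = - mult u w.
Proof. by rewrite -scaleN1r mZl scaleN1r. Qed.
Lemma mNr u w : mult w (- u) = - mult w u.
Proof. by rewrite !(mC w) mNl. Qed.
Lemma mBl u v w : mult (u - v) w = mult u w - mult v w.
Proof. by rewrite mDl mNl. Qed.
Lemma mBr u v w : mult w (u - v) = mult w u - mult w v.
Proof. by rewrite mDr mNr. Qed.

Lemma mlinear x : linear (mult x).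
Proof. by move=> a u v; rewrite mDr mZr. Qed.

Definition mlf x : {linear V -> V} :=
  HB.pack (mult x) (GRing.isLinear.Build R V V *:%R (mult x) (@mlinear x)).

Lemma memV0 x y : (y \in V0 mult x) = (mult x y == 0).
Proof. by rewrite /V0 memv_ker (lfunE (mlf x)). Qed.


Lemma orth_free (t : seq V) : uniq t -> (forall x, x \in t -> mult x x = x /\ x != 0) ->
  (forall x y, x \in t -> y \in t -> x != y -> mult x y = 0) -> free t.
Proof.
elim: t => [|x t IH] /=; first by rewrite nil_free.
move=> /andP[xt ut] hid hor.
rewrite free_cons IH ?andbT; first last.
- by move=> a b at' bt ab; apply: hor; rewrite ?inE ?at' ?bt ?orbT.
- by move=> a at'; apply: hid; rewrite inE at' orbT.
- by [].
apply/negP => xs.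
have sub : (<<t>> <= V0 mult x)%VS.
  apply/span_subvP => y yt; rewrite memV0; apply/eqP; apply: hor.
  + by rewrite inE eqxx.
  + by rewrite inE yt orbT.
  + by apply/eqP => xy; rewrite xy yt in xt.
have := subvP sub x xs; rewrite memV0.
have [-> xn0] := hid x (mem_head x t).
by rewrite (negPf xn0).
Qed.

Variable A : {vspace V}.
Hypothesis Asub : forall u v, u \in A -> v \in A -> mult u v \in A.
Hypothesis Aassoc : forall u v w, u \in A -> v \in A -> w \in A ->
    mult (mult u v) w = mult u (mult v w).

Section Phi.
Variables e w : V.
Hypotheses (eA : e \in A) (ee : mult e e = e) (wA : w \in A) (ew : mult e w = w).

Definition phi (p : {poly R}) : V :=
  foldr (fun c acc => c *: e + mult w acc) 0 (polyseq p).

Lemma phi0 : phi 0 = 0.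
Proof. by rewrite /phi polyseq0. Qed.

Lemma phi_cons q c : phi (q * 'X + c%:P) = c *: e + mult w (phi q).
Proof.
rewrite -cons_poly_def /phi polyseq_cons.
case: (boolP (nilp q)) => /= [/nilP q0|_] //.
have -> : q = 0 by apply: val_inj; rewrite /= q0 polyseq0.
rewrite polyseq0 /=. case: (c =P 0) => [->|cn0]. rewrite polyC0 polyseq0 /= scale0r add0r m0r //.
by rewrite polyseqC (negPf (introN eqP cn0)) /= m0r.
Qed.

Lemma phiC c : phi c%:P = c *: e.
Proof. by have := phi_cons 0 c; rewrite mul0r add0r phi0 m0r addr0. Qed.

Lemma phiX r : phi (r * 'X) = mult w (phi r).
Proof. by have := phi_cons r 0; rewrite addr0 scale0r add0r. Qed.

Lemma phi_in p : phi p \in A /\ mult e (phi p) = phi p.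
Proof.
elim/poly_ind: p => [|q c [IHA IHe]]; first by rewrite phi0 mem0v m0r.
rewrite phi_cons; split.
  by rewrite memvD ?memvZ ?Asub.
by rewrite mDr mZr ee -Aassoc // ew.
Qed.

Lemma phi_lin a p r : phi (a *: p + r) = a *: phi p + phi r.
Proof.
elim/poly_ind: p r => [|q c IH] r; first by rewrite scaler0 add0r phi0 scaler0 add0r.
have [r' [d ->]] : exists r' d, r = r' * 'X + d%:P.
  by elim/poly_ind: r => [|r' d _]; [exists 0, 0; rewrite mul0r add0r| exists r', d].
have -> : a *: (q * 'X + c%:P) + (r' * 'X + d%:P) = (a *: q + r') * 'X + (a * c + d)%:P.
  rewrite scalerDr scalerAl polyCD polyCM -mul_polyC mulrDl.
  by rewrite -!addrA; congr (_ + _); rewrite addrCA.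
rewrite !phi_cons IH mDr mZr scalerDr scalerDl scalerA.
by rewrite -!addrA; congr (_ + _); rewrite addrCA.
Qed.

Lemma phiD p r : phi (p + r) = phi p + phi r.
Proof. by have := phi_lin 1 p r; rewrite !scale1r. Qed.
Lemma phiZ a p : phi (a *: p) = a *: phi p.
Proof. by have := phi_lin a p 0; rewrite !addr0 phi0 addr0. Qed.
Lemma phiN p : phi (- p) = - phi p.
Proof. by rewrite -scaleN1r phiZ scaleN1r. Qed.
Lemma phiB p r : phi (p - r) = phi p - phi r.
Proof. by rewrite phiD phiN. Qed.

Lemma phiM p q : phi (p * q) = mult (phi p) (phi q).
Proof.
elim/poly_ind: q => [|q c IH]; first by rewrite mulr0 phi0 m0r.
rewrite mulrDr mulrA (mulrC p c%:P) mul_polyC phiD phiZ phiX.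
rewrite IH phi_cons mDr mZr.
have [pA pe] := phi_in p; have [qA _] := phi_in q.
rewrite (mC _ e) pe addrC; congr (_ + _).
by rewrite -Aassoc // (mC w (phi p)) Aassoc.
Qed.

Lemma phi1 : phi 1 = e.
Proof. by rewrite -polyC1 phiC scale1r. Qed.

Lemma phiXw : phi 'X = w.
Proof. by rewrite -['X]mul1r phiX phi1 mC ew. Qed.


Lemma phi_sum n (F : 'I_n -> {poly R}) : phi (\sum_(i < n) F i) = \sum_(i < n) phi (F i).
Proof.
elim: n F => [|n IH] F; first by rewrite !big_ord0 phi0.
by rewrite !big_ord_recr /= phiD IH.
Qed.

Lemma phi_annih : exists p, p != 0 /\ phi p = 0.
Proof.
pose n := \dim (fullv : {vspace V}).
pose X := [tuple phi 'X^i | i < n.+1].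
have nf : ~~ free X.
  apply/negP => /eqP H; have := dimvS (subvf <<X>>%VS).
  by rewrite H size_tuple ltnn.
have nH : ~ (forall k : 'I_n.+1 -> R, \sum_(i < n.+1) k i *: X`_i = 0 -> forall i, k i = 0).
  by move=> H; apply: (negP nf); apply/freeP.
have [k kH] := not_all_ex_not _ _ nH.
have [ks kH2] := imply_to_and _ _ kH.
have [i ki] := not_all_ex_not _ _ kH2.
exists (\poly_(j < n.+1) k (inord j)); split.
  apply/eqP => /(congr1 (fun p : {poly R} => p`_i)).
  by rewrite coef_poly ltn_ord inord_val coef0.
rewrite poly_def phi_sum -[RHS]ks; apply: eq_bigr => j _.
by rewrite phiZ inord_val nth_mktuple.
Qed.

Lemma phi_min : exists p, [/\ p != 0, phi p = 0 &
   forall q : {poly R}, q != 0 -> (size q < size p)%N -> phi q != 0].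
Proof.
have [p0 [p0n p00]] := phi_annih.
suff H : forall m (p : {poly R}), (size p <= m)%N -> p != 0 -> phi p = 0 -> exists p, [/\ p != 0, phi p = 0 &
   forall q : {poly R}, q != 0 -> (size q < size p)%N -> phi q != 0] by exact: (H _ p0 (leqnn _)).
elim=> [|m IH] p sp pn pp.
  by move: pn; rewrite -size_poly_eq0; move: sp; rewrite leqn0 => ->.
case: (classic (exists q : {poly R}, [/\ q != 0, (size q < size p)%N & phi q = 0])).
  move=> [q [qn qs qp]]; apply: (IH q) => //.
  by rewrite -ltnS (leq_trans qs).
move=> nq; exists p; split=> // q qn qs; apply/eqP => qp; by apply: nq; exists q.
Qed.

Hypothesis FR2 : forall u v : V, mult u u + mult v v = 0 -> u = 0.
Hypothesis wne : w \notin <[e]>%VS.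

Lemma K_idem : exists f, [/\ f \in A, mult f f = f, mult e f = f, f != 0 & f != e].
Proof.
have [p [pn0 pp pmin]] := phi_min.
have e0 : e != 0.
  apply/eqP => e0; move: wne; rewrite -ew e0 m0l mem0v //.
have sp1 : size p != 1%N.
  apply/eqP => sp1; have := size1_polyC (eq_leq sp1) => pE.
  have c0 : p`_0 != 0.
    by apply: contra pn0 => /eqP c0; rewrite pE c0 polyC0.
  by move: pp; rewrite pE phiC => /eqP; rewrite scaler_eq0 (negPf c0) (negPf e0).
have FR1 u : mult u u = 0 -> u = 0.
  by move=> uu; apply: (FR2 (v := 0)); rewrite uu m0l addr0.
have [a pa] : exists a, root p a.
  pose pc := map_poly (real_complex R) p.
  have : size pc != 1%N by rewrite size_map_poly.
  move/closed_rootP => [[a b] rz].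
  case: (b =P 0) => [b0|/eqP bn0].
    exists a; move: rz; rewrite b0 /root.
    have -> : (Complex a 0 : R[i]) = real_complex R a by [].
    rewrite horner_map /= => /eqP /(congr1 (@complex.Re R)) /= ->; by [].
  exfalso.
  pose q : {poly R} := ('X - a%:P)^+2 + (b^+2)%:P.
  have sq : size q = 3%N.
    rewrite /q size_polyDl size_exp_XsubC // size_polyC.
    by case: (_ != 0).
  have qn0 : q != 0 by rewrite -size_poly_eq0 sq.
  have sr : (size (p %% q)%R <= 2)%N by have := @ltn_modp _ p q; rewrite qn0 sq.
  have r0 : p %% q = 0.
    have H := @lin_root R a b (p %% q)`_1 (p %% q)`_0 bn0.
    rewrite -(poly_le2 sr) in H.
    have [h1 h0] : (p %% q)`_1 = 0 /\ (p %% q)`_0 = 0.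
      apply: H; move: rz; rewrite /root /pc {1}(divp_eq p q) rmorphD rmorphM /=.
      by rewrite hornerD hornerM quad_root mulr0 add0r => /eqP.
    by rewrite (poly_le2 sr) h1 h0 scale0r add0r.
  set d := p %/ q.
  have pE : p = d * q by rewrite {1}(divp_eq p q) r0 addr0.
  have dn0 : d != 0 by apply: contra pn0 => /eqP d0; rewrite pE d0 mul0r.
  have sd : (size d < size p)%N by rewrite pE size_mul // sq addn3 /=.
  have yn0 := pmin d dn0 sd.
  set y := phi d.
  pose u := phi (('X - a%:P) * d).
  have : mult (b *: y) (b *: y) + mult u u = 0.
    rewrite mZl mZr scalerA /u /y -!phiM -phiZ -phiD.
    have -> : b * b *: (d * d) + ('X - a%:P) * d * (('X - a%:P) * d) = d * p.
      rewrite pE /q -mul_polyC. ring.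
    by rewrite phiM pp m0r.
  move/FR2/eqP; rewrite scaler_eq0 (negPf bn0) /=.
  by apply/negP.
have [d pE] := factor_theorem _ _ pa.
have dn0 : d != 0 by apply: contra pn0 => /eqP d0; rewrite pE d0 mul0r.
have sd : (size d < size p)%N.
  by rewrite pE size_mul ?polyXsubC_eq0 // size_XsubC addn2 /=.
have yn0 := pmin d dn0 sd.
set y := phi d.
set c := d.[a].
have yy : mult y y = c *: y.
  have : root (d - c%:P) a by rewrite /root hornerD hornerN hornerC subrr.
  move/factor_theorem => [h hE].
  apply/eqP; rewrite -subr_eq0; apply/eqP.
  rewrite /y -phiM -phiZ -phiB.
  have -> : d * d - c *: d = h * p.
    by rewrite -mul_polyC -mulrBl hE pE; ring.
  by rewrite phiM pp m0r.
have cn0 : c != 0.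
  apply: contra yn0 => /eqP c0; apply/eqP; apply: FR1; by rewrite yy c0 scale0r.
have [yA ey] := phi_in d.
exists (c^-1 *: y); split.
- by rewrite memvZ.
- rewrite mZl mZr yy !scalerA; congr (_ *: _); by rewrite divfK.
- by rewrite mZr ey.
- by rewrite scaler_eq0 invr_eq0 (negPf cn0).
apply/eqP => fe.
have yE : y = c *: e by rewrite -fe scalerA divff // scale1r.
move: pp; rewrite pE phiM -/y yE phiB phiXw phiC mZl mBr mZr ew ee.
move/eqP; rewrite scaler_eq0 (negPf cn0) /= subr_eq0 => /eqP wE.
by move: wne; rewrite wE memvZ ?memv_line.
Qed.


End Phi.

Section Fam.
Variable one : V.
Hypothesis one_id : forall v, mult one v = v.
Hypothesis FR2 : forall u v : V, mult u u + mult v v = 0 -> u = 0.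

Definition orth_fam (s : seq V) := [/\ uniq s, {subset s <= A},
  forall x, x \in s -> mult x x = x /\ x != 0,
  forall x y, x \in s -> y \in s -> x != y -> mult x y = 0 &
  \sum_(x <- s) x = one].

Lemma mult_suml (s : seq V) a : mult (\sum_(x <- s) x) a = \sum_(x <- s) mult x a.
Proof.
elim: s => [|x s IH]; first by rewrite !big_nil m0l.
by rewrite !big_cons mDl IH.
Qed.

Lemma fam_span s : orth_fam s ->
  (forall x w, x \in s -> w \in A -> mult x w \in <[x]>%VS) -> (\dim A <= size s)%N.
Proof.
move=> [us sA sid sor ssum] H.
apply: (leq_trans _ (dim_span s)); apply: dimvS; apply/subvP => a aA.
rewrite -(one_id a) -ssum mult_suml big_seq; apply: rpred_sum => x xs.
have /vlineP [k ->] := H x a xs aA.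
by rewrite memvZ // memv_span.
Qed.

Lemma fam_step s : orth_fam s -> (size s < \dim A)%N ->
  exists s', orth_fam s' /\ size s' = (size s).+1.
Proof.
move=> fs ss.
case: (classic (exists x w, [/\ x \in s, w \in A & mult x w \notin <[x]>%VS])); last first.
  move=> nH; exfalso; move: ss; rewrite ltnNge => /negP; apply; apply: fam_span => // x w xs wA.
  by apply/negPn/negP => H; apply: nH; exists x, w.
move=> [e [w [es wA wne]]].
have [us sA sid sor ssum] := fs.
have eA := sA e es; have [ee en0] := sid e es.
have ewA : mult e w \in A by apply: Asub.
have eew : mult e (mult e w) = mult e w by rewrite -Aassoc // ee.
have [f [fA ff ef fn0 fne]] := K_idem eA ee ewA eew FR2 wne.
have fe : mult f e = f by rewrite mC.
have efA : e - f \in A by rewrite rpredB.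
have remE := mem_rem_uniq e us.
have fg g : g \in s -> g != e -> mult f g = 0.
  by move=> gs ge; rewrite -fe Aassoc ?fA ?eA ?sA // (sor e g) ?m0r // eq_sym.
have efg g : g \in s -> g != e -> mult (e - f) g = 0.
  by move=> gs ge; rewrite mBl fg // (sor e g) // ?subrr // eq_sym.
have fef : mult f (e - f) = 0 by rewrite mBr fe ff subrr.
have efef : mult (e - f) (e - f) = e - f.
  by rewrite mBr !mBl ee ef fe ff subrr subr0.
have efn0 : e - f != 0 by rewrite subr_eq0 eq_sym.
exists [:: f, e - f & rem e s]; split; last first.
  have s0 : (0 < size s)%N by move: es; case: (s).
  by rewrite /= size_rem // prednK.
split.
- rewrite /= rem_uniq // andbT !inE !remE negb_or !negb_and !negbK.
  rewrite -andbA; apply/and3P; split.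
  + apply/eqP => H; move: fef; rewrite -H ff => /eqP; by rewrite (negPf fn0).
  + apply/orP; right; apply/negP => fs'.
    have := sor e f es fs'; rewrite eq_sym fne ef => /(_ isT) /eqP.
    by rewrite (negPf fn0).
  + apply/orP; right; apply/negP => efs.
    have eef : e != e - f.
      apply/eqP => H; move: fn0.
      have -> : f = e - (e - f) by rewrite opprB addrC subrK.
      by rewrite -H subrr eqxx.
    have := sor e (e - f) es efs eef; rewrite mBr ee ef => /eqP.
    by rewrite (negPf efn0).
- move=> x; rewrite !inE => /or3P[/eqP->|/eqP->|] //.
  by rewrite remE inE => /andP[_ xs]; exact: sA.
- move=> x; rewrite !inE => /or3P[/eqP->|/eqP->|] //.
  by rewrite remE inE => /andP[_ xs]; exact: sid.
- have memE x : x \in [:: f, e - f & rem e s] -> [\/ x = f, x = e - f | x \in s /\ x != e].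
    rewrite !inE => /or3P[/eqP->|/eqP->|]; [by constructor 1|by constructor 2|].
    by rewrite remE inE => /andP[xe xs]; constructor 3.
  move=> x y /memE[->|->|[xs xe]] /memE[->|->|[ys ye]]; rewrite ?eqxx // => xy.
  + by rewrite fg.
  + by rewrite mC.
  + by rewrite efg.
  + by rewrite mC fg.
  + by rewrite mC efg.
  + by rewrite sor.
- by rewrite -ssum (big_rem e es) !big_cons addrA [f + _]addrC subrK.
Qed.


End Fam.
End Basic.


Theorem mainTheorem7 (R : realType) (V : vectType R) (gT : finGroupType)
    (G : {group gT}) (T : {set gT}) (mult : V -> V -> V) (ip : V -> V -> R)
    (phi : gT -> V -> V) (psi : gT -> V) (one : V) :
  majorana_rep G T mult ip phi psi ->
  (forall v, mult one v = v) ->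
  axiom_M2' mult ip ->
  (forall x : V, x != 0 -> idempotent_el mult x ->
     (exists s : seq V, forall y, y \in V0 mult x -> idempotent_el mult y -> y \in s)
     /\ (\dim (V0 mult x) <= 2)%N) ->
  forall W : {vspace V}, is_subalgebra mult W -> is_associative_on mult W ->
    (\dim W <= 3)%N.
Proof.
move=> HV one_id HM2 Hid W Wsub Wass.
have Halg := V_alg HV; have Hip := V_ip HV; have M1 := axM1 HV.
have one_r v : mult v one = v by rewrite (mC Halg) one_id.
case: (one =P 0) => [one0|/eqP onen0].
  have : (W <= 0)%VS.
    by apply/subvP => v _; rewrite memv0 -(one_id v) one0 (m0l Halg).
  by move/dimvS; rewrite dimv0 => /leq_trans; apply.
pose A := (W + <[one]>)%VS.
have WA u : u \in W -> u \in A by move=> uW; apply: (subvP (addvSl W <[one]>%VS)).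
have oneA : one \in A by apply: (subvP (addvSr W <[one]>%VS)); apply: memv_line.
have memA x : x \in A -> exists u c, u \in W /\ x = u + c *: one.
  move/memv_addP => [u uW [v /vlineP [c ->] ->]]; by exists u, c.
have Asub : forall u v, u \in A -> v \in A -> mult u v \in A.
  move=> x y /memA [u [a [uW ->]]] /memA [v [b [vW ->]]].
  rewrite (mDl Halg) !(mDr Halg) !(mZl Halg) !(mZr Halg) !one_id !one_r.
  repeat first [apply: rpredD | apply: rpredZ].
  - exact: (WA _ (Wsub _ _ uW vW)).
  - exact: (WA _ uW).
  - exact: (WA _ vW).
  - exact: oneA.
have Aassoc : forall u v w, u \in A -> v \in A -> w \in A ->
    mult (mult u v) w = mult u (mult v w).
  move=> x y z /memA [u [a [uW ->]]] /memA [v [b [vW ->]]] /memA [w [c [wW ->]]].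
  have mDl' := mDl Halg; have mDr' := mDr Halg; have mZl' := mZl Halg; have mZr' := mZr Halg.
  rewrite (mDl' u) (mDl' (mult u _)) (mDl' u) !mZl' !one_id; congr (_ + _).
  rewrite (mDr' v (b *: one) u) (mZr' b one u) one_r.
  rewrite (mDl' v (b *: one) (w + c *: one)) (mZl' b one) one_id.
  rewrite (mDl' (mult u v) (b *: u) (w + c *: one)) (mZl' b u).
  rewrite (mDr' (mult v (w + c *: one)) (b *: (w + c *: one)) u) mZr'; congr (_ + _).
  rewrite (mDr' w (c *: one) (mult u v)) mZr' one_r (mDr' w (c *: one) v) mZr' one_r.
  rewrite (mDr' (mult v w) (c *: v) u) mZr' Wass //.
have ip0 w : ip 0 w = 0.
  have := ip_linl Hip w 1 0 0; rewrite scale1r addr0 mul1r => H.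
  by apply: (@addrI _ (ip 0 w)); rewrite addr0 -H.
have ipge0 u : 0 <= ip u u.
  by case: (u =P 0) => [->|/eqP un0]; [rewrite ip0 | exact/ltW/(ip_pos Hip)].
have ipsq u : ip u u = ip (mult u u) one by rewrite -M1 one_r.
have FR2 : forall u v : V, mult u u + mult v v = 0 -> u = 0.
  move=> u v H.
  have : ip u u + ip v v = 0.
    have := ip_linl Hip one 1 (mult u u) (mult v v).
    by rewrite scale1r mul1r H ip0 -!ipsq => <-.
  move=> H2; apply/eqP; apply: contraT => un0.
  have := ip_pos Hip un0; have := ipge0 v; lra.
have Hs := fam_step Halg Asub Aassoc one_id FR2.
have fam1 : orth_fam mult A one [:: one].
  split.
  - by [].
  - by move=> x; rewrite inE => /eqP ->.
  - by move=> x; rewrite inE => /eqP ->; rewrite one_id.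
  - by move=> x y; rewrite !inE => /eqP -> /eqP ->; rewrite eqxx.
  - by rewrite big_seq1.
rewrite leqNgt; apply/negP => dW.
have dA : (3 < \dim A)%N by apply: (leq_trans dW); apply: dimvS; apply: addvSl.
have h1 : (size [:: one] < \dim A)%N by apply: (leq_trans _ dA).
have [s2 [f2 z2]] := Hs _ fam1 h1.
have h2 : (size s2 < \dim A)%N by rewrite z2; apply: (leq_trans _ dA).
have [s3 [f3 z3]] := Hs _ f2 h2.
have h3 : (size s3 < \dim A)%N by rewrite z3 z2.
have [s4 [f4 z4]] := Hs _ f3 h3.
have [us sA sid sor _] := f4.
case: s4 us sA sid sor z4 {f4} => [//|e1 t] /= /andP[e1t ut] sA sid sor [zt].
have [ee1 e1n0] := sid e1 (mem_head _ _).
have ft : free t.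
  apply: (orth_free Halg ut).
  - by move=> x xt; apply: sid; rewrite inE xt orbT.
  - by move=> x y xt yt; apply: sor; rewrite inE ?xt ?yt orbT.
have sub : (<<t>> <= V0 mult e1)%VS.
  apply/span_subvP => y yt; rewrite (memV0 Halg); apply/eqP; apply: sor.
  + exact: mem_head.
  + by rewrite inE yt orbT.
  + by apply/eqP => ey; rewrite ey yt in e1t.
have := dimvS sub; move/eqP: ft => ->; rewrite zt.
have [_ ] := Hid e1 e1n0 ee1.
rewrite z3 z2 => k1 k2; by have := leq_trans k2 k1.
Qed.
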